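(* In the setting described in the context, suppose that $\mathbb E_N[e^{\gamma X(x)}]\le R_\gamma\epsilon_N^{-\gamma^2/2}$ for all $\gamma>0$, $x\in\Omega$, $N$ (some $R_\gamma>0$ and $\epsilon_N\to0$), and that there exist deterministic constants $\mathrm C,\mathrm c>0$ such that $\mathbb P_N$-almost surely, for any $x\in\Omega$ there is a (possibly random) compact $\mho_x^N\subset\Omega$ with $|\mho_x^N|\ge\mathrm c\,\epsilon_N^d$ and $X(t)\ge X(x)-\mathrm C$ for all $t\in\mho_x^N$ (it is not required that $x\in\mho_x^N$). Then for any $\alpha>\gamma_*$, $\mathbb P_N[\mathscr T_N^\alpha\ne\emptyset]\to0$ as $N\to\infty$. Moreover, if $\varpi_N$ is any increasing sequence with $\varpi_N/\log\epsilon_N^{-1}\to+\infty$, then for any $\gamma>0$ there is $C_\gamma>0$ with \[ \mathbb P_N\big[\sup_\Omega X\ge\varpi_N\big]\le C_\gamma\epsilon_N^{-\gamma^2/2-d}e^{-\gamma\varpi_N}. \]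
   Context: $\Omega\subset\mathbb R^d$ is a bounded, simply connected open set with smooth boundary; $|\cdot|$ is Lebesgue measure; $\gamma_*=\sqrt{2d}$. For each $N$, $\mathbb P_N$ (expectation $\mathbb E_N$) is a probability measure under which the canonical process $X$ is a random function on $\Omega$ that is integrable, bounded above and upper semicontinuous, and which approximates a Gaussian log-correlated field on $\Omega$ (for each $f\in C_c^\infty(\Omega)$ the law of $\int fX$ converges to that of the Gaussian field with covariance $\log|x-y|^{-1}+g(x,y)$, $g$ continuous, bounded above, $L^2$). Thick points: for $\alpha\ge0$, $\mathscr T_N^\alpha=\{x\in\Omega:X(x)\ge\alpha\log\epsilon_N^{-1}\}$. *)

(* Defs.v *)
From HB Require Import structures.
From mathcomp Require Import all_boot all_order all_algebra.
From mathcomp Require Import all_classical all_reals all_analysis.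
Set Implicit Arguments. Unset Strict Implicit. Unset Printing Implicit Defensive.
Import Order.TTheory GRing.Theory Num.Theory.
Import numFieldNormedType.Exports.
Local Open Scope classical_set_scope.
Local Open Scope ring_scope.

(** Points of R^d are row vectors 'rV[R]_d (topology of the product/max norm,
    which is the usual topology of R^d). *)
Section Defs.
Variable R : realType.

Definition eucl_dist (d : nat) (x y : 'rV[R]_d) : R :=
  Num.sqrt (\sum_(i < d) (x ord0 i - y ord0 i) ^+ 2).

(** d-dimensional Lebesgue integral, written out as the iterated
    one-dimensional Lebesgue integral (Fubini/Tonelli). *)
Fixpoint leb_int (d : nat) : ('rV[R]_d -> \bar R) -> \bar R :=
  match d return ('rV[R]_d -> \bar R) -> \bar R with
  | 0 => fun f => f 0
  | d'.+1 => fun f =>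
      (\int[lebesgue_measure]_(t in [set: R])
         leb_int (fun v : 'rV[R]_d' => f (row_mx (const_mx t : 'rV[R]_1) v)))%E
  end.

Definition leb_meas (d : nat) (A : set 'rV[R]_d) : \bar R :=
  leb_int (fun x => (\1_A x)%:E).

Definition Rd_borel (d : nat) := g_sigma_algebraType (@open 'rV[R]_d).

Fixpoint iter_dir (d : nat) (vs : seq 'rV[R]_d) (f : 'rV[R]_d -> R)
  : 'rV[R]_d -> R :=
  match vs with
  | [::] => f
  | v :: vs' => fun x => 'D_v (iter_dir vs' f) x
  end.

Definition smooth (d : nat) (f : 'rV[R]_d -> R) : Prop :=
  (forall vs, continuous (iter_dir vs f)) /\
  (forall vs v x, derivable (iter_dir vs f) x v).

Definition test_fun (d : nat) (Omega : set 'rV[R]_d) (f : 'rV[R]_d -> R) :=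
  smooth f /\ exists K, [/\ compact K, K `<=` Omega &
                            forall x, ~ K x -> f x = 0].

Definition smooth_boundary (d : nat) (Omega : set 'rV[R]_d) :=
  forall p, closure Omega p -> ~ Omega p ->
  exists r : R, exists psi : 'rV[R]_d -> R,
    [/\ 0 < r, smooth psi, psi p = 0,
        exists v, 'D_v psi p != 0 &
        forall x, ball p r x -> (Omega x <-> psi x < 0)].

Definition simply_connected (d : nat) (A : set 'rV[R]_d) :=
  (forall x y, A x -> A y -> exists p : R -> 'rV[R]_d,
     [/\ {within `[0, 1], continuous p}, p @` `[0, 1] `<=` A,
         p 0 = x & p 1 = y]) /\
  (forall g : R -> 'rV[R]_d, {within `[0, 1], continuous g} ->
     g @` `[0, 1] `<=` A -> g 0 = g 1 ->
     exists H : R * R -> 'rV[R]_d,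
       [/\ {within `[0, 1] `*` `[0, 1], continuous H},
           H @` (`[0, 1] `*` `[0, 1]) `<=` A,
           forall s, s \in `[0, 1] -> H (s, 0) = g s /\ H (s, 1) = g 0 &
           forall t, t \in `[0, 1] -> H (0, t) = g 0 /\ H (1, t) = g 0]).

Definition usc_on (d : nat) (Omega : set 'rV[R]_d) (u : 'rV[R]_d -> R) :=
  forall x, Omega x -> forall a, u x < a ->
    \forall y \near x, Omega y -> u y < a.

Definition outer_prob (dT : measure_display) (T : measurableType dT)
  (P : probability T R) (A : set T) : \bar R :=
  ereal_inf [set P B | B in [set B | measurable B /\ A `<=` B]].

(** E[h(Z)] for Z ~ N(0, s2) *)
Definition gauss_expect (s2 : R) (h : R -> R) : \bar R :=
  (\int[lebesgue_measure]_(w in [set: R])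
     (h (Num.sqrt s2 * w) * normal_pdf 0 1 w)%:E)%E.

Definition standing_assumptions (d : nat) (dT : measure_display)
  (T : measurableType dT) (P : nat -> probability T R)
  (X : T -> 'rV[R]_d -> R) (Omega : set 'rV[R]_d) : Prop :=
  [/\
      measurable_fun [set: T * Rd_borel d] (fun p => X p.1 p.2),
      (forall w, (leb_int (fun x => (\1_Omega x * `|X w x|)%:E) < +oo)%E),
      (forall w, exists M : R, forall x, Omega x -> X w x <= M),
      (forall w, usc_on Omega (X w)) &
      (* approximates a Gaussian log-correlated field on Omega *)
      exists g : 'rV[R]_d -> 'rV[R]_d -> R,
        [/\ {within Omega `*` Omega, continuous (fun p => g p.1 p.2)},
            (exists M : R, forall x y, Omega x -> Omega y -> g x y <= M),
            (leb_int (fun x => leb_int (fun y =>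
                (\1_Omega x * \1_Omega y * g x y ^+ 2)%:E)) < +oo)%E &
            forall f, test_fun Omega f ->
            let s2 := fine (leb_int (fun x => leb_int (fun y =>
                  (f x * f y * (- ln (eucl_dist x y) + g x y))%:E))) in
            0 <= s2 /\
            forall h : R -> R, continuous h ->
              (exists M : R, forall t, `|h t| <= M) ->
              (fun N => ('E_(P N)[fun w =>
                  h (fine (leb_int (fun x => (f x * X w x)%:E)))])%E)
                @ \oo --> gauss_expect s2 h]].

End Defs.

(* Main.v *)
Require Import Defs.
From HB Require Import structures.
From mathcomp Require Import all_boot all_order all_algebra.
From mathcomp Require Import all_classical all_reals all_analysis.
From mathcomp Require Import measurable_realfun.
From mathcomp Require Import ring lra.
Import Order.TTheory GRing.Theory Num.Theory.
Import numFieldNormedType.Exports.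
Local Open Scope classical_set_scope.
Local Open Scope ring_scope.

Set Implicit Arguments. Unset Strict Implicit. Unset Printing Implicit Defensive.
Section W1.
Section S.
Variable R : realType.
Lemma ball_row d (q : 'rV[R]_(1 + d)) r t v :
  ball q r (row_mx (const_mx t : 'rV[R]_1) v) <->
  ball (q ord0 (lshift d ord0)) r t /\ ball (rsubmx q) r v.
Proof.
rewrite /ball /= /mx_ball; split.
  case=> r0 H; split.
    by have := H ord0 (lshift d ord0); rewrite row_mxEl mxE.
  split=> // i j; rewrite mxE.
  by have := H i (rshift 1 j); rewrite row_mxEr.
case=> H1 [r0 H2]; split=> // i j; case: (split_ordP j) => k ->.
  by rewrite row_mxEl mxE !ord1.
by rewrite row_mxEr; have := H2 i k; rewrite mxE.
Qed.

Definition phi d (p : (R * Rd_borel R d)%type) : Rd_borel R (1 + d) :=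
  row_mx (const_mx p.1 : 'rV[R]_1) p.2.

Lemma phi_ball_measurable d (Q : 'rV[R]_(1 + d)) r :
  measurable (@phi d @^-1` ball Q r).
Proof.
have -> : @phi d @^-1` ball Q r =
    ball (Q ord0 (lshift d ord0)) r `*` (ball (rsubmx Q) r : set (Rd_borel R d)).
  by apply/seteqP; split=> -[t v] /=; rewrite /phi /= ball_row.
apply: measurableX; first exact: open_measurable (ball_open _ _).
exact: (@sub_sigma_algebra _ setT (@open _) _ (ball_open _ _)).
Qed.

Lemma measurable_phi d : measurable_fun setT (@phi d).
Proof.
apply: (@measurability _ _ _ (Rd_borel R (1 + d)) _ _ (@open 'rV[R]_(1 + d))) => //.
move=> _ [U oU <-]; rewrite setTI.
pose A (n : nat) : set (R * Rd_borel R d) :=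
  if @unpickle ('rV[rat]_(1 + d) * rat)%type n is Some qr then
    if pselect (0 < @ratr R qr.2 /\ ball (map_mx (@ratr R) qr.1) (@ratr R qr.2) `<=` U)
    then @phi d @^-1` ball (map_mx (@ratr R) qr.1) (@ratr R qr.2) else set0
  else set0.
have -> : @phi d @^-1` U = \bigcup_n A n.
  apply/seteqP; split; last first.
    move=> p [n _]; rewrite /A; case: (unpickle n) => // -[q r] /=.
    by case: pselect => // -[_ sub] /sub.
  move=> p /= Up.
  have := oU _ Up; move=> /nbhs_ballP [e /= e0 sub].
  have [r] := @rat_in_itvoo R 0 (e / 2) ltac:(by rewrite divr_gt0).
  rewrite in_itv /= => /andP [r0 re].
  have : forall j : 'I_(1 + d), exists qj : rat,
      ratr qj \in `](phi p ord0 j - ratr r), (phi p ord0 j + ratr r)[.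
    move=> j; apply: rat_in_itvoo.
    by rewrite ltrBlDr -addrA ltrDl addr_gt0.
  move=> /choice [f Hf].
  pose q : 'rV[rat]_(1 + d) := \row_j f j.
  exists (pickle (q, r)) => //; rewrite /A pickleK /=.
  have qb : ball (map_mx ratr q : 'rV[R]_(1 + d)) (ratr r) (phi p).
    rewrite /ball /= /mx_ball; split=> // i j; rewrite ord1.
    have := Hf j; rewrite in_itv /= => /andP[h1 h2].
    rewrite (_ : map_mx ratr q ord0 j = ratr (f j)); last by rewrite !mxE.
    by rewrite /ball /= ltr_distlC ltrBlDr h2 -ltrBlDr h1.
  case: pselect => // -[]; split => //.
  move=> y qy; apply: sub.
  move: qb qy; rewrite /ball /= /mx_ball => -[_ h1] [_ h2]; split => // i j.
  rewrite /ball /=.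
  have := h1 i j; have := h2 i j; rewrite /ball /= => a b.
  rewrite (le_lt_trans (ler_distD (map_mx ratr q i j) _ _)) //.
  rewrite (splitr e) ltrD // ?(le_lt_trans _ re) // distrC //.
    exact: ltW.
  by rewrite distrC; apply: ltW.
apply: bigcupT_measurable => n; rewrite /A; case: (unpickle n) => [[q r]|] //=.
by case: (pselect _) => H /=; [exact: phi_ball_measurable|exact: measurable0].
Qed.
End S.

End W1.
Section W2.
Local Open Scope ereal_scope.
Section PS.
Context d1 d2 (T1 : measurableType d1) (T2 : measurableType d2) (R : realType).
Variable m1 : {sigma_finite_measure set T1 -> \bar R}.
Variable m2 : {sigma_finite_measure set T2 -> \bar R}.
Lemma my_product_measure_sigma_finite : sigma_finite setT (m1 \x m2).
Proof.
have /sigma_finiteP[F [TF ndF Foo]] := sigma_finiteT m1.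
have /sigma_finiteP[G [TG ndG Goo]] := sigma_finiteT m2.
exists (fun n => F n `*` G n).
 rewrite -setXTT TF TG predeqE => -[x y]; split.
    move=> [/= [n _ Fnx] [k _ Gky]]; exists (maxn n k) => //; split.
    - by move: x Fnx; exact/subsetPset/ndF/leq_maxl.
    - by move: y Gky; exact/subsetPset/ndG/leq_maxr.
  by move=> [n _ []/= ? ?]; split; exists n.
move=> k; have [? ?] := Foo k; have [? ?] := Goo k.
split; first exact: measurableX.
by rewrite product_measure1E// lte_mul_pinfty// ge0_fin_numE.
Qed.
Definition pm_sf : {sigma_finite_measure set (T1 * T2)%type -> \bar R} :=
  HB.pack_for (sigma_finite_measure _ R) (m1 \x m2)
    (Measure_isSigmaFinite.Build _ _ _ (m1 \x m2) my_product_measure_sigma_finite).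
End PS.

Section S2.
Variable R : realType.

Lemma leb_int_ge0 d (f : 'rV[R]_d -> \bar R) : (forall x, 0 <= f x) -> 0 <= leb_int f.
Proof.
elim: d f => [|d IH] f f0 /=; first exact: f0.
by apply: integral_ge0 => t _; apply: IH => v; exact: f0.
Qed.

Lemma tonelli_d (d : nat) :
  forall (dX : measure_display) (X : measurableType dX)
    (mu : {sigma_finite_measure set X -> \bar R})
    (F : (X * Rd_borel R d)%type -> \bar R),
    measurable_fun setT F -> (forall z, 0 <= F z) ->
    measurable_fun setT (fun w => leb_int (fun x => F (w, x))) /\
    \int[mu]_w leb_int (fun x => F (w, x)) = leb_int (fun x => \int[mu]_w F (w, x)).
Proof.
elim: d => [|d IH] dX X mu F mF F0.
  split => //=.
  have h : measurable_fun setT (fun w : X => (w, ((0%R : 'rV[R]_0) : Rd_borel R 0))).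
    exact: measurable_fun_pair.
  exact: (measurableT_comp mF h).
pose G : ((X * measurableTypeR R) * Rd_borel R d)%type -> \bar R :=
  fun z => F (z.1.1, @phi R d (z.1.2, z.2)).
have mG : measurable_fun setT G.
  apply: (measurableT_comp mF); apply: measurable_fun_pair.
    exact: (measurableT_comp measurable_fst measurable_fst).
  apply: (measurableT_comp (@measurable_phi R d)).
  apply: measurable_fun_pair => //.
  exact: (measurableT_comp measurable_snd measurable_fst).
have G0 z : 0 <= G z by exact: F0.
pose mu' := pm_sf mu (@lebesgue_measure R).
have [mH eqH] := IH _ _ mu' G mG G0.
pose H z := leb_int (fun v => G (z, v)).
have H0 z : 0 <= H z by apply: leb_int_ge0.
split.
  exact: (measurable_fun_fubini_tonelli_F H mH H0).
transitivity (leb_int (fun v => \int[mu']_z G (z, v))).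
  rewrite -eqH.
  exact: (esym (fubini_tonelli1 (m1:=mu) (m2:=@lebesgue_measure R) H mH H0)).
have mGv v : measurable_fun setT (fun z => G (z, v)).
  have h : measurable_fun setT (fun z : X * measurableTypeR R => (z, (v : Rd_borel R d))).
    exact: measurable_fun_pair.
  exact: (measurableT_comp mG h).
transitivity (leb_int (fun v => \int[@lebesgue_measure R]_t \int[mu]_w G ((w, t), v))).
  congr leb_int; apply/funext => v.
  rewrite -(fubini_tonelli (fun z => G (z, v)) (mGv v) (fun z => G0 _)).
  exact: (fubini_tonelli1 (m1:=mu) (m2:=@lebesgue_measure R) (fun z => G (z, v)) (mGv v) (fun z => G0 _)).
pose f (q : (X * (measurableTypeR R * Rd_borel R d))%type) := F (q.1, @phi R d q.2).
have mf : measurable_fun setT f.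
  apply: (measurableT_comp mF); apply: measurable_fun_pair => //.
  exact: (measurableT_comp (@measurable_phi R d)).
have f0 q : 0 <= f q by exact: F0.
pose K (p : (measurableTypeR R * Rd_borel R d)%type) := \int[mu]_w F (w, @phi R d p).
have mK : measurable_fun setT K := measurable_fun_fubini_tonelli_G (m1:=mu) f mf f0.
have K0 p : 0 <= K p by apply: integral_ge0 => w _; exact: F0.
have [_ eqK] := IH _ _ (@lebesgue_measure R) K mK K0.
exact: (esym eqK).
Qed.
End S2.

End W2.
Section W3.
Local Open Scope ereal_scope.
Section S3.
Variable R : realType.
Notation mfRd d f := (measurable_fun (setT : set (Rd_borel R d)) f).

Lemma mf_section d (f : Rd_borel R d.+1 -> \bar R) (t : R) :
  mfRd d.+1 f -> mfRd d (fun v => f (row_mx (const_mx t : 'rV[R]_1) v)).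
Proof.
move=> mf.
have h : measurable_fun (setT : set (Rd_borel R d)) (fun v => @phi R d (t, v)).
  apply: (measurableT_comp (@measurable_phi R d)).
  exact: measurable_fun_pair.
exact: (measurableT_comp mf h).
Qed.

Lemma mf_outer d (f : Rd_borel R d.+1 -> \bar R) :
  mfRd d.+1 f -> (forall x, 0 <= f x) ->
  measurable_fun (setT : set (measurableTypeR R))
    (fun t => leb_int (fun v => f (row_mx (const_mx t : 'rV[R]_1) v))).
Proof.
move=> mf f0.
have mF : measurable_fun setT (fun p : (measurableTypeR R * Rd_borel R d)%type => f (@phi R d p)).
  exact: (measurableT_comp mf (@measurable_phi R d)).
have [h _] := tonelli_d (@lebesgue_measure R) mF (fun z => f0 _).
exact: h.
Qed.

Lemma leb_int_le d (f g : 'rV[R]_d -> \bar R) :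
  mfRd d f -> mfRd d g -> (forall x, 0 <= f x) -> (forall x, f x <= g x) ->
  leb_int f <= leb_int g.
Proof.
elim: d f g => [|d IH] f g mf mg f0 fg /=; first exact: fg.
apply: ge0_le_integral => //.
- by move=> t _; apply: leb_int_ge0 => v; exact: f0.
- exact: mf_outer.
- apply: mf_outer => // x; exact: le_trans (f0 x) (fg x).
- by move=> t _; apply: IH => //; try exact: mf_section.
Qed.

Lemma leb_int_scale d (k : R) (f : 'rV[R]_d -> \bar R) : (0 <= k)%R ->
  mfRd d f -> (forall x, 0 <= f x) ->
  leb_int (fun x => k%:E * f x) = k%:E * leb_int f.
Proof.
elim: d f => [|d IH] f k0 mf f0 //=.
transitivity (\int[@lebesgue_measure R]_(t in setT)
   (k%:E * leb_int (fun v => f (row_mx (const_mx t : 'rV[R]_1) v)))).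
  apply: eq_integral => t _; apply: IH => //; exact: mf_section.
apply: ge0_integralZl_EFin => //.
  by move=> t _; apply: leb_int_ge0.
exact: mf_outer.
Qed.

Lemma leb_int_ball_fin d (r : R) : (0 < r)%R ->
  leb_int (fun x : 'rV[R]_d => (\1_(ball (0%R : 'rV[R]_d) r) x : R)%:E) < +oo.
Proof.
move=> r0; elim: d => [|d IH] /=.
  by rewrite ltry.
have eq1 t v : (\1_(ball (0%R : 'rV[R]_d.+1) r) (row_mx (const_mx t : 'rV[R]_1) v) : R)%:E =
    (\1_(ball (0%R : R) r) t : R)%:E * (\1_(ball (0%R : 'rV[R]_d) r) v : R)%:E.
  have -> : (0%R : 'rV[R]_d) = rsubmx (0%R : 'rV[R]_(1 + d)).
    by apply/matrixP => i j; rewrite !mxE.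
  have -> : (0%R : R) = (0%R : 'rV[R]_(1 + d)) ord0 (lshift d ord0) by rewrite mxE.
  rewrite /indic /=.
  have := ball_row (0%R : 'rV[R]_(1 + d)) r t v.
  case: (pselect (ball (0%R : 'rV[R]_(1 + d)) r (row_mx (const_mx t : 'rV[R]_1) v))) => h.
    move=> [/(_ h) [h1 h2] _].
    by rewrite !mem_set // mul1e.
  move=> [_ h']; rewrite memNset //.
  case: (pselect (ball ((0%R : 'rV[R]_(1 + d)) ord0 (lshift d ord0)) r t)) => h1.
    case: (pselect (ball (rsubmx (0%R : 'rV[R]_(1 + d))) r v)) => h2.
      by exfalso; apply: h; exact: h'.
    by rewrite (memNset h2) mule0.
  by rewrite (memNset h1) mul0e.
pose L := leb_int (fun v : 'rV[R]_d => (\1_(ball (0%R : 'rV[R]_d) r) v : R)%:E).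
have mb : mfRd d (fun v => (\1_(ball (0%R : 'rV[R]_d) r) v : R)%:E).
  apply/(@measurable_EFinP _ (Rd_borel R d) R setT (\1_(ball (0%R : 'rV[R]_d) r))); apply: measurable_indic.
  exact: (@sub_sigma_algebra _ setT (@open _) _ (ball_open _ _)).
have eq2 t : leb_int (fun v => (\1_(ball (0%R : 'rV[R]_d.+1) r) (row_mx (const_mx t : 'rV[R]_1) v) : R)%:E)
    = (\1_(ball (0%R : R) r) t : R)%:E * L.
  rewrite (_ : (fun v => _) = fun v => (\1_(ball (0%R : R) r) t : R)%:E * (\1_(ball (0%R : 'rV[R]_d) r) v : R)%:E); last first.
    by apply/funext => v; rewrite eq1.
  apply: leb_int_scale => //.
under eq_integral => t _ do rewrite eq2.
rewrite ge0_integralZr //.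
- rewrite integral_indic // ?setIT ?setTI.
  rewrite [X in X * _](_ : _ = (r *+ 2)%:E); last exact: lebesgue_measure_ball (ltW r0).
  apply: lte_mul_pinfty => //.
  by rewrite lee_fin mulrn_wge0 // ltW.
- exact: open_measurable (ball_open _ _).
- apply/(@measurable_EFinP _ (measurableTypeR R) R setT (\1_(ball (0%R : R) r))).
  apply: measurable_indic; exact: open_measurable (ball_open _ _).
- exact: leb_int_ge0.
Qed.
End S3.

End W3.
Section W4.
Local Open Scope ereal_scope.
Section S4.
Variable R : realType.
Notation mfRd d f := (measurable_fun (setT : set (Rd_borel R d)) f).

Lemma open_mRd d (U : set 'rV[R]_d) : open U -> measurable (U : set (Rd_borel R d)).
Proof. by move=> oU; exact: (@sub_sigma_algebra _ setT (@open _) _ oU). Qed.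

Lemma compact_mRd d (K : set 'rV[R]_d) : compact K -> measurable (K : set (Rd_borel R d)).
Proof.
move=> cK; have cl : closed K := compact_closed (@norm_hausdorff _ _) cK.
rewrite -(setCK K); apply: measurableC; apply: open_mRd.
exact: closed_openC.
Qed.

Lemma mf_indic d (U : set 'rV[R]_d) (k : R) : measurable (U : set (Rd_borel R d)) ->
  mfRd d (fun x => (k * (\1_U x : R))%:E).
Proof.
move=> mU.
apply/(@measurable_EFinP _ (Rd_borel R d) R setT (fun x => k * (\1_U x : R))%R).
apply: measurable_funM => //; exact: measurable_indic.
Qed.

Lemma leb_meas_scale d (U : set 'rV[R]_d) (k : R) : (0 <= k)%R -> measurable (U : set (Rd_borel R d)) ->
  leb_int (fun x => (k * (\1_U x : R))%:E) = k%:E * leb_meas U.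
Proof.
move=> k0 mU.
have -> : (fun x => (k * (\1_U x : R))%:E) = (fun x => k%:E * (\1_U x : R)%:E).
  by apply/funext => x; rewrite EFinM.
rewrite /leb_meas leb_int_scale //.
- have := mf_indic 1 mU.
  by congr measurable_fun; apply/funext => x; rewrite mul1r.
Qed.


Lemma core_bound (d : nat) (dT : measure_display) (T : measurableType dT)
  (P : probability T R) (X : T -> 'rV[R]_d -> R) (Omega : set 'rV[R]_d)
  (mX : measurable_fun [set: (T * Rd_borel R d)%type] (fun p => X p.1 p.2))
  (oO : open Omega) (LO : leb_meas Omega < +oo)
  (gamma B : R) (g0 : (0 < gamma)%R) (B0 : (0 <= B)%R)
  (mom : forall x, Omega x -> 'E_P[fun w => expR (gamma * X w x)] <= B%:E)
  (C m : R) (m0 : (0 < m)%R)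
  (ae : {ae P, forall w, forall x, Omega x -> exists K : set 'rV[R]_d,
      [/\ compact K, K `<=` Omega, (m%:E <= leb_meas K) &
          forall t, K t -> (X w x - C <= X w t)%R]})
  (v : R) :
  outer_prob P [set w | exists x, Omega x /\ (v <= X w x)%R] <=
  ((fine (leb_meas Omega) + 1) * B * expR (gamma * C) / m * expR (- (gamma * v)))%:E.
Proof.
have mO := open_mRd oO.
pose F (p : (T * Rd_borel R d)%type) := ((\1_Omega p.2 : R) * expR (gamma * X p.1 p.2))%:E.
have mF : measurable_fun setT F.
  apply/(@measurable_EFinP _ (T * Rd_borel R d)%type R setT
    (fun p => (\1_Omega p.2 : R) * expR (gamma * X p.1 p.2))%R).
  apply: measurable_funM.
    exact: (measurableT_comp (measurable_indic mO) measurable_snd).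
  have h : measurable_fun setT (fun p : (T * Rd_borel R d)%type => gamma * X p.1 p.2)%R.
    exact: measurable_funM.
  exact: (@measurableT_comp _ _ _ _ _ _ expR setT _ (@measurable_expR R) h).
have F0 p : 0 <= F p by rewrite lee_fin mulr_ge0 // expR_ge0.
pose Y w := leb_int (fun x => F (w, x)).
have [mY eqY] := tonelli_d P mF F0.
have EY : \int[P]_w Y w <= B%:E * leb_meas Omega.
  rewrite /Y eqY -(leb_meas_scale B0 mO).
  apply: leb_int_le.
  - exact: (measurable_fun_fubini_tonelli_G (m1:=P) F mF F0).
  - exact: mf_indic.
  - by move=> x; apply: integral_ge0 => w _; exact: F0.
  - move=> x; rewrite /F /=; case: (pselect (Omega x)) => Ox.
      have -> : (\1_Omega x : R) = 1%R by rewrite indicE mem_set.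
      rewrite mulr1.
      under eq_integral do rewrite mul1r.
      by have := mom x Ox; rewrite unlock.
    have -> : (\1_Omega x : R) = 0%R by rewrite indicE memNset.
    rewrite mulr0.
    under eq_integral do rewrite mul0r.
    by rewrite integral0.
pose thr := (m * expR (gamma * (v - C)))%R.
have thr0 : (0 < thr)%R by rewrite mulr_gt0 // expR_gt0.
pose Bs := [set w | thr%:E <= Y w].
have mBs : measurable Bs.
  have -> : Bs = Y @^-1` `[thr%:E, +oo[%classic.
    by apply/seteqP; split => w /=; rewrite in_itv /= andbT.
  have := mY measurableT _ (emeasurable_itv `[thr%:E, +oo[).
  by rewrite setTI.
have MB : thr%:E * P Bs <= B%:E * leb_meas Omega.
  apply: le_trans EY.
  have mIB : measurable_fun setT (fun x => (\1_Bs x : R)%:E).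
    apply/(@measurable_EFinP _ T R setT (\1_Bs : T -> R)).
    exact: measurable_indic.
  rewrite -(setIT Bs) -integral_indic // -ge0_integralZl_EFin //; try exact: ltW.
  apply: ge0_le_integral => //.
  - by move=> w _; rewrite mule_ge0 // ?lee_fin // ltW.
  - exact: emeasurable_funM.
  - move=> w _; rewrite indicE; case: (pselect (Bs w)) => h.
      by rewrite mem_set // mule1.
    by rewrite memNset // mule0; exact: leb_int_ge0.
have [N [mN PN0 subN]] := ae.
pose A := [set w | exists x, Omega x /\ (v <= X w x)%R].
have AB : A `<=` Bs `|` N.
  move=> w [x [Ox vx]]; case: (pselect (N w)) => Nw; [by right | left].
  have Qw : forall x, Omega x -> exists K : set 'rV[R]_d,
      [/\ compact K, K `<=` Omega, (m%:E <= leb_meas K) &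
          forall t, K t -> (X w x - C <= X w t)%R].
    apply: contrapT => nq; apply: Nw; exact: subN.
  have [K [cK sK mK lK]] := Qw x Ox.
  have mK' := compact_mRd cK.
  have h : leb_int (fun t => (expR (gamma * (v - C)) * (\1_K t : R))%:E) <= Y w.
    apply: leb_int_le.
    - exact: mf_indic.
    - have h : measurable_fun (setT : set (Rd_borel R d)) (fun x => (w, x)).
        exact: measurable_fun_pair.
      exact: (measurableT_comp mF h).
    - by move=> t; rewrite lee_fin mulr_ge0 // expR_ge0.
    - move=> t; rewrite /F /=; case: (pselect (K t)) => Kt.
        have -> : (\1_K t : R) = 1%R by rewrite indicE mem_set.
        have -> : (\1_Omega t : R) = 1%R by rewrite indicE mem_set //; exact: sK.
        rewrite mulr1 mul1r lee_fin ler_expR ler_pM2l //.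
        apply: le_trans (lK t Kt); exact: lerB.
      have -> : (\1_K t : R) = 0%R by rewrite indicE memNset.
      by rewrite mulr0 lee_fin mulr_ge0 // expR_ge0.
  rewrite leb_meas_scale ?expR_ge0 // in h.
  rewrite /Bs /=; apply: le_trans h.
  by rewrite /thr EFinM muleC lee_wpmul2l // lee_fin expR_ge0.
have o1 : outer_prob P A <= P (Bs `|` N).
  apply: ge_ereal_inf; exists (P (Bs `|` N)) => //.
  by exists (Bs `|` N) => //; split => //; exact: measurableU.
have o2 : P (Bs `|` N) <= P Bs.
  apply: le_trans (measureU2 _ mBs mN) _.
  by rewrite [X in _ + X <= _](_ : _ = 0) ?adde0 //; exact: PN0.
apply: le_trans o1 _; apply: le_trans o2 _.
have LE : leb_meas Omega = (fine (leb_meas Omega))%:E.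
  by rewrite fineK // ge0_fin_numE // ; exact: leb_int_ge0.
have PE : P Bs = (fine (P Bs))%:E.
  rewrite fineK // ge0_fin_numE ?measure_ge0 //.
  by apply: le_lt_trans (probability_le1 P mBs) _; rewrite ltry.
move: MB; rewrite LE PE -!EFinM !lee_fin => MB.
set L := fine (leb_meas Omega) in MB *.
set pB := fine (P Bs) in MB *.
have L0 : (0 <= L)%R by rewrite /L fine_ge0 //; exact: leb_int_ge0.
have key : (pB * thr <= B * (L + 1))%R.
  by rewrite mulrC (le_trans MB) // ler_wpM2l // lerDl.
have -> : ((L + 1) * B * expR (gamma * C) / m * expR (- (gamma * v)) = (B * (L + 1)) / thr)%R.
  rewrite /thr mulrBr expRD !expRN.
  have e1 : expR (gamma * v) != 0%R by rewrite gt_eqF // expR_gt0.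
  have e2 : expR (gamma * C) != 0%R by rewrite gt_eqF // expR_gt0.
  have e3 : m != 0%R by rewrite gt_eqF.
  field.
  by rewrite e1 e2 e3.
by rewrite ler_pdivlMr.
Qed.
End S4.

End W4.
Section W5.
Section S5.
Variable R : realType.
Local Open Scope ereal_scope.

Lemma outer_mono (dT : measure_display) (T : measurableType dT) (P : probability T R)
  (A A' : set T) : A `<=` A' -> outer_prob P A <= outer_prob P A'.
Proof.
move=> AA'; apply: le_ereal_inf_tmp => _ [B [mB A'B] <-].
apply: ge_ereal_inf; exists (P B) => //; exists B => //; split => //.
exact: subset_trans AA' A'B.
Qed.

Lemma leb_meas_bounded d (Omega : set 'rV[R]_d) : open Omega -> bounded_set Omega ->
  leb_meas Omega < +oo.
Proof.
move=> oO [M [Mreal normAltM]].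
have sub : Omega `<=` ball (0%R : 'rV[R]_d) (`|M| + 2)%R.
  move=> y Oy; have := normAltM (`|M| + 1)%R; rewrite ltr_pwDr ?real_ler_norm //.
  move=> /(_ erefl) /(_ y Oy) /= hy.
  rewrite -ball_normE /ball_ /= sub0r normrN.
  by apply: le_lt_trans hy _; rewrite ltrD2l ltr1n.
have r0 : (0 < `|M| + 2)%R by rewrite ltr_wpDl.
apply: le_lt_trans (leb_int_ball_fin d r0).
apply: leb_int_le.
- apply/(@measurable_EFinP _ (Rd_borel R d) R setT (\1_Omega : 'rV[R]_d -> R)).
  exact: measurable_indic (open_mRd oO).
- apply/(@measurable_EFinP _ (Rd_borel R d) R setT (\1_(ball (0%R : 'rV[R]_d) (`|M| + 2)%R) : 'rV[R]_d -> R)).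
  exact: measurable_indic (open_mRd (ball_open _ _)).
- by move=> x; rewrite lee_fin.
- move=> x; rewrite lee_fin !indicE; case: (pselect (Omega x)) => Ox.
    by rewrite !mem_set //; exact: sub.
  by rewrite (memNset Ox).
Qed.
End S5.


End W5.

Unset Implicit Arguments.
Theorem proposition3p8 (R : realType) (d : nat) (dT : measure_display)
  (T : measurableType dT) (P : nat -> probability T R)
  (X : T -> 'rV[R]_d -> R) (Omega : set 'rV[R]_d) (eps : nat -> R) :
  open Omega -> bounded_set Omega -> simply_connected Omega ->
  smooth_boundary Omega ->
  standing_assumptions P X Omega ->
  (forall N, 0 < eps N) -> eps @ \oo --> 0 ->
  (forall gamma : R, 0 < gamma -> exists Rg : R, 0 < Rg /\
     forall N x, Omega x ->
       ('E_(P N)[fun w => expR (gamma * X w x)]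
          <= (Rg * eps N `^ (- (gamma ^+ 2 / 2)))%:E)%E) ->
  (exists C c : R, [/\ 0 < C, 0 < c &
     forall N, {ae P N, forall w, forall x, Omega x ->
       exists K : set 'rV[R]_d,
         [/\ compact K, K `<=` Omega,
             ((c * eps N ^+ d)%:E <= leb_meas K)%E &
             forall t, K t -> X w x - C <= X w t]}]) ->
  (forall alpha : R, Num.sqrt (2 * d%:R) < alpha ->
     (fun N => outer_prob (P N)
        [set w | exists x, Omega x /\ alpha * ln (eps N)^-1 <= X w x])
       @ \oo --> 0%E)
  /\
  (forall varpi : nat -> R,
     {homo varpi : n m / (n <= m)%N >-> n <= m} ->
     (fun N => varpi N / ln (eps N)^-1) @ \oo --> +oo ->
     forall gamma : R, 0 < gamma -> exists Cg : R, 0 < Cg /\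
       forall N,
         (outer_prob (P N)
            [set w | ((varpi N)%:E <= ereal_sup [set (X w x)%:E | x in Omega])%E]
          <= (Cg * eps N `^ (- (gamma ^+ 2 / 2) - d%:R)
                 * expR (- (gamma * varpi N)))%:E)%E).
Proof.
move=> oO bO _ _ SA eps0 epscv mom [C [c [C0 c0 aeN]]].
have [mX _ _ _ _] := SA.
have LO := leb_meas_bounded oO bO.
have L0 : (0 <= fine (leb_meas Omega))%R by rewrite fine_ge0 //; exact: leb_int_ge0.
have bnd : forall gamma : R, (0 < gamma)%R -> exists K0 : R, (0 < K0)%R /\ forall N v,
   (outer_prob (P N) [set w | exists x, Omega x /\ (v <= X w x)%R] <=
   (K0 * eps N `^ (- (gamma ^+ 2 / 2) - d%:R) * expR (- (gamma * v)))%:E)%E.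
  move=> gamma g0; have [Rg [Rg0 momg]] := mom gamma g0.
  exists ((fine (leb_meas Omega) + 1) * Rg * expR (gamma * C) / c)%R; split.
    apply: divr_gt0 => //; apply: mulr_gt0; last exact: expR_gt0.
    by apply: mulr_gt0 => //; rewrite ltr_wpDl.
  move=> N v.
  have B0 : (0 <= Rg * eps N `^ (- (gamma ^+ 2 / 2)))%R by rewrite mulr_ge0 ?powR_ge0 // ltW.
  have m0 : (0 < c * eps N ^+ d)%R by rewrite mulr_gt0 // exprn_gt0.
  apply: le_trans (core_bound mX oO LO g0 B0 (momg N) m0 (aeN N) v) _.
  rewrite lee_fin le_eqVlt; apply/orP; left; apply/eqP.
  have e0 := eps0 N.
  rewrite powRD; last by rewrite (gt_eqF e0) implybT.
  rewrite !powRN powR_mulrn ?ltW //.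
  have h1 : (eps N ^+ d != 0)%R by rewrite expf_neq0 // gt_eqF.
  have h2 : (c != 0)%R by rewrite gt_eqF.
  field.
  by rewrite h1 h2 gt_eqF // powR_gt0.
have epsR : eps @ \oo --> (0 : R)^'+.
  move=> U /= hU; have := epscv _ hU.
  move=> h; have h1 : (\forall N \near \oo, (0 < eps N -> U (eps N))) := h.
  exact: (filterS (fun N (hN : 0 < eps N -> U (eps N)) => hN (eps0 N)) h1).
split.
  move=> alpha salpha.
  have a0 : (0 < alpha)%R := le_lt_trans (sqrtr_ge0 _) salpha.
  have [K0 [K00 hK]] := bnd alpha a0.
  have h2d : (2 * d%:R < alpha ^+ 2 :> R)%R.
    have h0 : (0 <= 2 * d%:R :> R)%R by apply: mulr_ge0.
    rewrite -(sqr_sqrtr h0).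
    by rewrite ltrXn2r // ?sqrtr_ge0 // ltW.
  have kap : (0 < alpha ^+ 2 / 2 - d%:R)%R by lra.
  apply: (@squeeze_cvge _ _ _ _ (fun _ => 0%E) _
     (fun N => (K0 * eps N `^ (alpha ^+ 2 / 2 - d%:R))%:E)).
  - apply: nearW => N; apply/andP; split.
      apply: le_ereal_inf_tmp => _ [B _ <-]; exact: measure_ge0.
    apply: le_trans (hK N (alpha * ln (eps N)^-1)) _.
    rewrite lee_fin le_eqVlt; apply/orP; left; apply/eqP.
    have e0 := eps0 N.
    rewrite /powR !(gt_eqF e0) -mulrA -expRD lnV ?posrE //.
    by congr (_ * expR _); field.
  - exact: cvg_cst.
  - apply/fine_cvgP; split; first exact: nearW.
    rewrite -(mulr0 K0).
    apply: cvgM; first exact: cvg_cst.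
    exact: (cvg_comp _ _ epsR (powR_cvg0 kap)).
move=> varpi _ _ gamma g0.
have [K0 [K00 hK]] := bnd gamma g0.
exists (K0 * expR gamma)%R; split; first by rewrite mulr_gt0 // expR_gt0.
move=> N.
have incl : [set w | ((varpi N)%:E <= ereal_sup [set (X w x)%:E | x in Omega])%E]
   `<=` [set w | exists x, Omega x /\ (varpi N - 1 <= X w x)%R].
  move=> w /= h; apply: contrapT => nx.
  have : (ereal_sup [set (X w x)%:E | x in Omega] <= (varpi N - 1)%:E)%E.
    apply: ge_ereal_sup => _ [x Ox <-]; rewrite lee_fin.
    case: (leP (varpi N - 1) (X w x)) => hx; last exact: ltW.
    by exfalso; apply: nx; exists x.
  move=> h2; have := le_trans h h2; rewrite lee_fin; lra.
apply: le_trans (outer_mono _ incl) _.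
apply: le_trans (hK N (varpi N - 1)) _.
rewrite lee_fin le_eqVlt; apply/orP; left; apply/eqP.
have -> : (- (gamma * (varpi N - 1)) = - (gamma * varpi N) + gamma)%R by ring.
rewrite expRD; ring.

Qed.
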